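(* Let $S$ be a finite set, let $p:2^{S}\to\mathbb{Z}\cup\{-\infty\}$ be fully supermodular with $p(\emptyset)=0$ and $p(S)$ finite, and let $B=B'(p)$. Let $f:S\to\mathbb{Z}\cup\{-\infty\}$ and $g:S\to\mathbb{Z}\cup\{+\infty\}$ with $f\le g$, let $T(f,g)=\{x\in\mathbb{R}^S: f\le x\le g\}$, and suppose $B^{\square}:=B\cap T(f,g)$ is non-empty; let $p^{\square}$ be the fully supermodular function with $B^{\square}=B'(p^{\square})$. Let $m\in B^{\square}\cap\mathbb{Z}^S$ and $u\in S$. Let $T_m(u)$ be the smallest $m$-tight set with respect to $p$ containing $u$, and $T^{\square}_m(u)$ the smallest $m$-tight set with respect to $p^{\square}$ containing $u$. Then $T^{\square}_m(u)=\{u\}$ if $m(u)=f(u)$, and $T^{\square}_m(u)=T_m(u)-\{v\in S-\{u\}: m(v)=g(v)\}$ if $m(u)>f(u)$.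
   Context: For $x\in\mathbb{R}^{S}$, $\widetilde x(Z)=\sum_{s\in Z}x(s)$. $B'(p)=\{x\in\mathbb{R}^{S}:\widetilde x(S)=p(S),\ \widetilde x(Z)\ge p(Z)\ \forall Z\subset S\}$, an integral base-polyhedron. A set $X\subseteq S$ is $m$-tight with respect to $p$ if $\widetilde m(X)=p(X)$; for fully supermodular $p$ and $m\in B'(p)$ the $m$-tight sets are closed under union and intersection, so a smallest $m$-tight set containing $u$ exists; it equals $\{s\in S: m+\chi_s-\chi_u\in B'(p)\}$, where $\chi_s$ is the unit vector of $s$. *)

(* Defs.v *)
From mathcomp Require Import all_boot all_order all_algebra.
From mathcomp Require Import reals.
Set Implicit Arguments. Unset Strict Implicit. Unset Printing Implicit Defensive.
Import Order.TTheory GRing.Theory Num.Theory.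
Local Open Scope ring_scope.

(* Values in Z ∪ {-oo} (for p and f) are encoded as [option int] with
   [None] = -oo; values in Z ∪ {+oo} (for g) as [option int] with [None] = +oo. *)

Definition fully_supermodular (S : finType) (p : {set S} -> option int) : Prop :=
  forall X Y a b, p X = Some a -> p Y = Some b ->
    exists c d, p (X :&: Y) = Some c /\ p (X :|: Y) = Some d /\ a + b <= c + d.

Definition xsum (R : realType) (S : finType) (x : S -> R) (Z : {set S}) : R :=
  \sum_(s in Z) x s.

Definition ge_low (R : realType) (y : R) (a : option int) : Prop :=
  match a with Some k => k%:~R <= y | None => True end.

Definition le_up (R : realType) (y : R) (a : option int) : Prop :=
  match a with Some k => y <= k%:~R | None => True end.

Definition Bp (R : realType) (S : finType) (p : {set S} -> option int)
    (x : S -> R) : Prop :=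
  (exists k, p [set: S] = Some k /\ xsum x [set: S] = k%:~R) /\
  (forall Z : {set S}, ge_low (xsum x Z) (p Z)).

Definition Tfg (R : realType) (S : finType) (f g : S -> option int)
    (x : S -> R) : Prop :=
  forall s, ge_low (x s) (f s) /\ le_up (x s) (g s).

Definition fle (S : finType) (f g : S -> option int) : Prop :=
  forall s a b, f s = Some a -> g s = Some b -> a <= b.

Definition mtight (S : finType) (p : {set S} -> option int) (m : S -> int)
    (X : {set S}) : bool :=
  p X == Some (\sum_(s in X) m s).

(* the smallest m-tight set containing u: the intersection of all of them *)
Definition Tm (S : finType) (p : {set S} -> option int) (m : S -> int) (u : S)
    : {set S} :=
  \bigcap_(X : {set S} | mtight p m X && (u \in X)) X.

(* Main.v *)
Require Import Defs.
From mathcomp Require Import all_boot all_order all_algebra.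
From mathcomp Require Import reals.
Import Order.TTheory GRing.Theory Num.Theory.
Local Open Scope ring_scope.

Lemma xsum_int (R : realType) (S : finType) (x : S -> int) Z :
  xsum (fun t => (x t)%:~R : R) Z = (\sum_(t in Z) x t)%:~R.
Proof. by rewrite /xsum raddf_sum. Qed.

Definition shiftm (S : finType) (m : S -> int) (s u : S) : S -> int :=
  fun t => m t + (t == s)%:Z - (t == u)%:Z.

Arguments shiftm {S}.

Lemma sum_ind (S : finType) (Z : {set S}) (s : S) :
  \sum_(t in Z) ((t == s)%:Z) = (s \in Z)%:Z.
Proof.
case sZ: (s \in Z).
  rewrite (bigD1 s) //= eqxx big1 ?addr0 // => t /andP[_ /negbTE ->] //.
rewrite big1 // => t tZ; case: eqP => // ets; by rewrite -ets tZ in sZ.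
Qed.

Lemma sum_shift (S : finType) (m : S -> int) (s u : S) (Z : {set S}) :
  \sum_(t in Z) shiftm m s u t = \sum_(t in Z) m t + (s \in Z)%:Z - (u \in Z)%:Z.
Proof.
by rewrite /shiftm big_split /= big_split /= sumrN !sum_ind.
Qed.

Lemma ge_low_int (R : realType) (k : int) a :
  ge_low (k%:~R : R) a <-> (forall j, a = Some j -> j <= k).
Proof.
case: a => [j|] /=; split => //.
- by rewrite ler_int => h j' [<-].
- by move=> h; rewrite ler_int; apply: h.
Qed.

Lemma le_up_int (R : realType) (k : int) a :
  le_up (k%:~R : R) a <-> (forall j, a = Some j -> k <= j).
Proof.
case: a => [j|] /=; split => //.
- by rewrite ler_int => h j' [<-].
- by move=> h; rewrite ler_int; apply: h.
Qed.

Lemma u_in_Tm (S : finType) (q : {set S} -> option int) (m : S -> int) (u : S) : u \in Tm q m u.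
Proof. by apply/bigcapP => X /andP[]. Qed.

Lemma Tm_char (R : realType) (S : finType) (q : {set S} -> option int)
  (m : S -> int) (u s : S)
  (hq : Bp q (fun t => (m t)%:~R : R)) (su : s != u) :
  s \in Tm q m u <-> Bp q (fun t => (shiftm m s u t)%:~R : R).
Proof.
case: hq => [[k [qS mS]] hZ]; split.
- move=> sT; split.
    exists k; split => //; rewrite xsum_int sum_shift !inE addrK.
    by rewrite xsum_int in mS.
  move=> Z; rewrite xsum_int sum_shift; apply/ge_low_int => j qZ.
  have := hZ Z; rewrite xsum_int => /ge_low_int /(_ j qZ) hj.
  case uZ: (u \in Z); case sZ: (s \in Z) => /=; rewrite ?subr0 ?addr0 ?addrK.
  all: try done.
    rewrite -ltzD1 subrK lt_neqAle hj andbT; apply/negP => /eqP ej.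
    have : s \in Z.
      move/bigcapP: sT; apply; rewrite uZ andbT /mtight qZ ej //.
    by rewrite sZ.
  by apply: (le_trans hj); rewrite lerDl.
- move=> [_ hZ'] ; apply/bigcapP => X /andP[/eqP tX uX].
  apply/negPn/negP => sX.
  have := hZ' X; rewrite xsum_int sum_shift => /ge_low_int /(_ _ tX).
  by rewrite uX (negbTE sX) addr0 lerBrDr gerDl.
Qed.

Arguments Tm_char {R S q m u s}.

Theorem claim2p9 (R : realType) (S : finType)
  (p : {set S} -> option int)
  (hp : fully_supermodular p)
  (hp0 : p set0 = Some 0)
  (hpS : exists k, p [set: S] = Some k)
  (f g : S -> option int)
  (hfg : fle f g)
  (hne : exists x : S -> R, Bp p x /\ Tfg f g x)
  (pb : {set S} -> option int)
  (hpb : fully_supermodular pb)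
  (hBb : forall x : S -> R, Bp pb x <-> (Bp p x /\ Tfg f g x))
  (m : S -> int)
  (hm : Bp p (fun s => (m s)%:~R : R) /\ Tfg f g (fun s => (m s)%:~R : R))
  (u : S) :
  (f u = Some (m u) -> Tm pb m u = [set u]) /\
  ((forall a, f u = Some a -> a < m u) ->
     Tm pb m u = Tm p m u :\: [set v | (v != u) && (g v == Some (m v))]).
Proof.
have hmb : Bp pb (fun s => (m s)%:~R : R) by apply/hBb.
have hmp := hm.1.
split.
- move=> fu; apply/setP => s; rewrite inE.
  case: (eqVneq s u) => [->|su]; first by rewrite u_in_Tm.
  apply/negbTE/negP => /(Tm_char hmb su) /hBb [_ /(_ u) [hl _]].
  move/ge_low_int: hl => /(_ _ fu).
  by rewrite /shiftm eqxx eq_sym (negbTE su) addr0 lerBrDr gerDl.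
- move=> fu; apply/setP => s; rewrite !inE.
  case: (eqVneq s u) => [->|su]; first by rewrite !u_in_Tm.
  rewrite /=; apply/idP/idP.
  + move/(Tm_char hmb su)/hBb => [hB hT]; apply/andP; split.
      apply/negP => /eqP gs; have [_ hu] := hT s.
      move/le_up_int: hu => /(_ _ gs).
      by rewrite /shiftm eqxx (negbTE su) subr0 gerDl.
    exact/(Tm_char hmp su).
  + case/andP => gs /(Tm_char hmp su) hB.
    apply/(Tm_char hmb su)/hBb; split => // t.
    have [hl hu] := hm.2 t.
    move/ge_low_int in hl; move/le_up_int in hu.
    rewrite /shiftm; case: (eqVneq t s) => [ets|nts]; case: (eqVneq t u) => [etu|ntu].
    * by move: su; rewrite -ets etu eqxx.
    * rewrite subr0; split; [apply/ge_low_int | apply/le_up_int] => j hj.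
        by apply: le_trans (hl j hj) _; rewrite lerDl.
      have := hu j hj; rewrite le_eqVlt; case/orP => [/eqP ej|].
        by move: gs; rewrite -ets hj ej eqxx.
      by rewrite lezD1.
    * rewrite addr0; split; [apply/ge_low_int | apply/le_up_int] => j hj.
        by rewrite -ltzD1 subrK; rewrite etu in hj *; exact: fu hj.
      by apply: le_trans (hu j hj); rewrite gerBl.
    * rewrite addr0 subr0; split; [apply/ge_low_int | apply/le_up_int]; by [].
Qed.
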